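(* Let $B\colon\mathbf{Set}\to\mathbf{Set}$ be a functor, $\Lambda$ a set and $(\tau_\lambda\colon B\mathbb{R}\to\mathbb{R})_{\lambda\in\Lambda}$ functions such that, for every set $Y$: (1) if $k\colon Y\to\mathbb{R}$ is bounded then $\tau_\lambda\circ Bk$ is bounded for each $\lambda$; (2) if $k_i\colon Y\to\mathbb{R}$ converges uniformly to $h$ then $\tau_\lambda\circ Bk_i$ converges uniformly to $\tau_\lambda\circ Bh$ for each $\lambda$. Let $X$ be a set and $S\subseteq\mathbf{Set}(X,\mathbb{R})$ such that every function in $S$ is bounded, the constant function $1$ is in $S$, and $S$ is closed under pointwise $\min$, $k\mapsto r+k$ and $k\mapsto rk$ for every $r\in\mathbb{R}$. Then $S$ is approximating: for every $h\colon X\to\mathbb{R}$ uniformly continuous w.r.t. $\mathscr{U}(S)$ and every $\lambda\in\Lambda$, the function $\tau_\lambda\circ Bh\colon BX\to\mathbb{R}$ is uniformly continuous w.r.t. the uniformity $\mathscr{U}(\{\tau_{\lambda'}\circ Bk\mid k\in S,\lambda'\in\Lambda\})$ on $BX$.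
   Context: For a set $Y$ and a family $F$ of functions $Y\to\mathbb{R}$, $\mathscr{U}(F)$ denotes the coarsest uniformity on $Y$ making every $f\in F$ uniformly continuous into $\mathbb{R}$ with the uniformity induced by the Euclidean metric. *)

(* Defs.v *)
From mathcomp Require Import all_boot all_order all_algebra.
From mathcomp Require Import reals.
Set Implicit Arguments. Unset Strict Implicit. Unset Printing Implicit Defensive.
Import Order.TTheory GRing.Theory Num.Theory.
Local Open Scope ring_scope.

(* The uniformity U(F) on Y: the coarsest uniformity making every f in F
   uniformly continuous into R (Euclidean uniformity), i.e. the uniformity
   generated by the subbase { (x,y) | |f x - f y| < e }, f in F, e > 0.
   E is an entourage iff it contains a finite intersection of subbasic
   entourages. *)
Definition unifF (R : realType) (Y : Type) (F : (Y -> R) -> Prop)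
  : (Y * Y -> Prop) -> Prop :=
  fun E => exists (n : nat) (fs : 'I_n -> (Y -> R)) (es : 'I_n -> R),
    (forall i, F (fs i)) /\ (forall i, 0 < es i) /\
    (forall x y : Y, (forall i, `|fs i x - fs i y| < es i) -> E (x, y)).

Definition unif_cont (R : realType) (Y : Type) (U : (Y * Y -> Prop) -> Prop)
  (h : Y -> R) : Prop :=
  forall e : R, 0 < e -> U (fun p => `|h p.1 - h p.2| < e).

Definition bounded_fun (R : realType) (Y : Type) (k : Y -> R) : Prop :=
  exists M : R, forall y, `|k y| <= M.

Definition unif_conv (R : realType) (Y : Type) (k : nat -> Y -> R) (h : Y -> R)
  : Prop :=
  forall e : R, 0 < e -> exists N : nat, forall i, (N <= i)%N ->
    forall y, `|k i y - h y| < e.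

(* Main.v *)
Require Import Defs.
From mathcomp Require Import all_boot all_order all_algebra.
From mathcomp Require Import reals ring lra.
From Stdlib Require Import ClassicalEpsilon FunctionalExtensionality Classical List Lia.
Import Order.TTheory GRing.Theory Num.Theory.
Set Implicit Arguments. Unset Strict Implicit.
Local Open Scope ring_scope.

Lemma Sext (R : realType) (X : Type) (S : (X -> R) -> Prop) (f g : X -> R) :
  S f -> (forall x, f x = g x) -> S g.
Proof. move=> Sf fg; have -> : g = f by apply: functional_extensionality => x; rewrite fg. exact: Sf. Qed.

Lemma Sconst (R : realType) (X : Type) (S : (X -> R) -> Prop)
  (S1 : S (fun _ => 1))
  (Sadd : forall (r : R) k, S k -> S (fun x => r + k x))
  (Smul : forall (r : R) k, S k -> S (fun x => r * k x)) (r : R) :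
  S (fun _ => r).
Proof. apply: Sext (Sadd r _ (Smul 0 _ S1)) _ => x /=; ring. Qed.

Lemma Smax (R : realType) (X : Type) (S : (X -> R) -> Prop)
  (Smin : forall k1 k2, S k1 -> S k2 -> S (fun x => Num.min (k1 x) (k2 x)))
  (Smul : forall (r : R) k, S k -> S (fun x => r * k x)) a b :
  S a -> S b -> S (fun x => Num.max (a x) (b x)).
Proof.
move=> Sa Sb; apply: Sext (Smul (-1) _ (Smin _ _ (Smul (-1) _ Sa) (Smul (-1) _ Sb))) _.
move=> x /=; case: (leP (a x) (b x)) => h1; case: (leP (-1*a x) (-1*b x)) => h2; lra.
Qed.

Lemma Sabs (R : realType) (X : Type) (S : (X -> R) -> Prop)
  (Smin : forall k1 k2, S k1 -> S k2 -> S (fun x => Num.min (k1 x) (k2 x)))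
  (Sadd : forall (r : R) k, S k -> S (fun x => r + k x))
  (Smul : forall (r : R) k, S k -> S (fun x => r * k x)) g (c : R) :
  S g -> S (fun x => `|g x - c|).
Proof.
move=> Sg; apply: Sext (Smax Smin Smul (Sadd (-c) _ (Smul 1 _ Sg)) (Sadd c _ (Smul (-1) _ Sg))) _.
move=> x /=; rewrite -maxrN; congr Num.max; ring.
Qed.

Definition fmax (R : realType) (A : Type) (u : A -> R) (l : list A) : R :=
  foldr (fun a acc => Num.max (u a) acc) 0 l.
Definition fmin (R : realType) (A : Type) (u : A -> R) (M : R) (l : list A) : R :=
  foldr (fun a acc => Num.min (u a) acc) M l.

Lemma fmax_ge0 (R : realType) A (u : A -> R) l : 0 <= fmax u l.
Proof. elim: l => [|a l IH] //=; by rewrite le_max IH orbT. Qed.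

Lemma fmax_ge (R : realType) A (u : A -> R) l a : In a l -> u a <= fmax u l.
Proof.
elim: l => [|b l IH] //= [->|H]; rewrite le_max ?lexx //.
by rewrite IH // orbT.
Qed.

Lemma fmax_lt (R : realType) A (u : A -> R) l e :
  0 < e -> (forall a, In a l -> u a < e) -> fmax u l < e.
Proof.
move=> e0; elim: l => [|b l IH] H //=; rewrite gt_max H /=; last by left.
by apply: IH => a Ha; apply: H; right.
Qed.

Lemma fmin_le (R : realType) A (u : A -> R) M l a : In a l -> fmin u M l <= u a.
Proof.
elim: l => [|b l IH] //= [->|H]; rewrite ge_min ?lexx //.
by rewrite IH // orbT.
Qed.

Lemma fmin_ge (R : realType) A (u : A -> R) M l L :
  L <= M -> (forall a, In a l -> L <= u a) -> L <= fmin u M l.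
Proof.
move=> LM; elim: l => [|b l IH] H //=; rewrite le_min H /=; last by left.
by apply: IH => a Ha; apply: H; right.
Qed.

Lemma S_fmax (R : realType) (X : Type) (S : (X -> R) -> Prop)
  (S1 : S (fun _ => 1))
  (Smin : forall k1 k2, S k1 -> S k2 -> S (fun x => Num.min (k1 x) (k2 x)))
  (Sadd : forall (r : R) k, S k -> S (fun x => r + k x))
  (Smul : forall (r : R) k, S k -> S (fun x => r * k x)) A (u : A -> X -> R) l :
  (forall a, In a l -> S (u a)) -> S (fun x => fmax (fun a => u a x) l).
Proof.
elim: l => [|b l IH] H /=; first exact: Sconst.
apply: (Smax Smin Smul (H b (or_introl erefl))).
by apply: IH => a Ha; apply: H; right.
Qed.

Lemma S_fmin (R : realType) (X : Type) (S : (X -> R) -> Prop)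
  (Smin : forall k1 k2, S k1 -> S k2 -> S (fun x => Num.min (k1 x) (k2 x)))
  A (u : A -> X -> R) M l :
  S (fun _ => M) ->
  (forall a, In a l -> S (u a)) -> S (fun x => fmin (fun a => u a x) M l).
Proof.
move=> SM; elim: l => [|b l IH] H /=; first exact: SM.
apply: (Smin _ _ (H b (or_introl erefl))).
by apply: IH => a Ha; apply: H; right.
Qed.

Lemma cover_lem (R : realType) (X : Type) (gs : list (X -> R)) :
  (forall g, In g gs -> bounded_fun g) ->
  forall eta : R, 0 < eta -> exists ys : list X, forall x, exists y,
    In y ys /\ forall g, In g gs -> `|g x - g y| < eta.
Proof.
elim: gs => [|f gs IH] Hb eta eta0.
  case: (classic (exists x : X, True)) => [[x0 _]|nx].
    by exists (x0 :: nil) => x; exists x0; split => //; left.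
  by exists nil => x; exfalso; apply: nx; exists x.
have [M HM] := Hb f (or_introl erefl).
set Mp := `|M|.
have HMp : forall x, `|f x| <= Mp by move=> x; apply: le_trans (HM x) (ler_norm M).
have Mp0 : 0 <= Mp by apply: normr_ge0.
have [ys Hys] := IH (fun g Hg => Hb g (or_intror Hg)) (eta / 2) ltac:(lra).
set s := eta / 2.
have s0 : 0 < s by rewrite /s; lra.
set N := Num.truncn (2 * Mp / s).
pose P y (j : nat) z := (forall g, In g gs -> `|g z - g y| < eta / 2) /\
   `|f z - (- Mp + j%:R * s)| < s.
pose eps y j := epsilon (inhabits y) (P y j).
exists (flat_map (fun y => map (eps y) (seq 0 (S N))) ys) => x.
have [y [Hy Hgy]] := Hys x.
set t := (f x + Mp) / s.
have fxb := HMp x; rewrite ler_norml in fxb; move/andP: fxb => [fx1 fx2].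
have t0 : 0 <= t by rewrite /t divr_ge0 //; lra.
set j := Num.truncn t.
have /andP [tj1 tj2] := truncn_itv t0.
have jN : (j <= N)%N.
  apply: le_truncn; rewrite /t ler_pM2r ?invr_gt0 //; lra.
have e1 : j%:R * s <= f x + Mp by move: tj1; rewrite /t ler_pdivlMr.
have e2 : f x + Mp < j%:R * s + s.
  by move: tj2; rewrite /t ltr_pdivrMr // -natr1 mulrDl mul1r.
have Px : P y j x.
  split => //; rewrite ltr_distlC; apply/andP; split; lra.
have Pz := epsilon_spec (inhabits y) (P y j) (ex_intro _ x Px).
exists (eps y j); split.
  apply/in_flat_map; exists y; split => //.
  apply: in_map; apply/in_seq; move/ssrnat.leP: jN => jN'; lia.
case: Pz => Hgz Hfz.
rewrite -/(eps y j) in Hgz Hfz.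
set z := eps y j in Hgz Hfz *.
have es : eta = s + s by rewrite /s; lra.
move=> g [<-|Hg].
  have h0 : `|f x - f z| <= `|f x - (- Mp + j%:R * s)| + `|f z - (- Mp + j%:R * s)|.
    by rewrite [X in _ <= _ + X]distrC; apply: ler_distD.
  have h1 := Px.2.
  lra.
have h0 : `|g x - g z| <= `|g x - g y| + `|g z - g y|.
  by rewrite [X in _ <= _ + X]distrC; apply: ler_distD.
have h1 := Hgy g Hg; have h2 := Hgz g Hg.
lra.
Qed.

Lemma mem_In (T : eqType) (x : T) (s : list T) : x \in s -> In x s.
Proof. elim: s => [|a s IH] //=; rewrite inE => /orP [/eqP ->|H]; [by left|right; exact: IH]. Qed.

Lemma approx (R : realType) (X : Type) (S : (X -> R) -> Prop)
  (Sbdd : forall k, S k -> bounded_fun k)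
  (S1 : S (fun _ => 1))
  (Smin : forall k1 k2, S k1 -> S k2 -> S (fun x => Num.min (k1 x) (k2 x)))
  (Sadd : forall (r : R) k, S k -> S (fun x => r + k x))
  (Smul : forall (r : R) k, S k -> S (fun x => r * k x))
  (h : X -> R) : unif_cont (unifF S) h ->
  forall e : R, 0 < e -> exists k, S k /\ forall x, `|k x - h x| < e.
Proof.
move=> Hh e e0.
set e' := e / 4.
have e'0 : 0 < e' by rewrite /e'; lra.
have [n [fs [es [HS [Hes Himp]]]]] := Hh e' e'0.
pose gs := map (fun i : 'I_n => fun x => (es i)^-1 * fs i x) (enum 'I_n).
have gsS : forall g, In g gs -> S g.
  by move=> g /in_map_iff [i [<- _]]; apply: Smul.
have gsB : forall g, In g gs -> bounded_fun g by move=> g /gsS; apply: Sbdd.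
have key : forall x y, (forall g, In g gs -> `|g x - g y| < 1) -> `|h x - h y| < e'.
  move=> x y H; apply: (Himp x y) => i.
  have := H _ (in_map (fun i : 'I_n => fun x => (es i)^-1 * fs i x) _ i
                 (mem_In (mem_enum _ i))).
  rewrite -mulrBr normrM gtr0_norm ?invr_gt0 // mulrC ltr_pdivrMr // mul1r //.
have [ys0 Hys0] := cover_lem gsB (ltr01 : (0 : R) < 1).
set M := fmax (fun y => `|h y|) ys0 + e'.
have HM : forall x, `|h x| <= M.
  move=> x; have [y [Hy Hxy]] := Hys0 x.
  have h1 := key x y Hxy; have /= h2 := fmax_ge (fun y => `|h y|) Hy.
  have := ler_distD (h y) (h x) 0; rewrite !subr0 => h3.
  rewrite /M; lra.
have M0 : 0 < M by have := fmax_ge0 (fun y => `|h y|) ys0; rewrite /M; lra.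
set C := 2 * M + e'.
have C0 : 0 < C by rewrite /C; lra.
set eta := e' / C.
have eta0 : 0 < eta by rewrite /eta divr_gt0.
have eta1 : eta <= 1 by rewrite /eta ler_pdivrMr // mul1r /C; lra.
have Ceta : C * eta = e' by rewrite /eta mulrC divfK // gt_eqF.
have [ys Hys] := cover_lem gsB eta0.
pose D y x := fmax (fun g : X -> R => `|g x - g y|) gs.
pose phi y x := (h y + e') + C * D y x.
exists (fun x => fmin (fun y => phi y x) M ys); split.
  apply: (S_fmin Smin (u := phi)) => [|y _]; first exact: Sconst.
  apply Sadd; apply Smul.
  apply: (S_fmax S1 Smin Sadd Smul (u := fun g x => `|g x - g y|)) => g Hg.
  by apply: Sabs => //; apply: gsS.
move=> x.
have := HM x; rewrite ler_norml => /andP [hx1 hx2].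
have lo : h x <= fmin (fun y => phi y x) M ys.
  apply: fmin_ge => // y Hy; rewrite /phi.
  have := HM y; rewrite ler_norml => /andP [hy1 hy2].
  have D0 : 0 <= D y x by apply: fmax_ge0.
  case: (classic (forall g, In g gs -> `|g x - g y| < 1)) => [H|H].
    have := key x y H; have := ler_norm (h x - h y).
    have := mulr_ge0 (ltW C0) D0; lra.
  have [g Hg] := not_all_ex_not _ _ H.
  have [Hg1 Hg2] := imply_to_and _ _ Hg.
  have g1 : 1 <= `|g x - g y| by rewrite leNgt; apply/negP.
  have D1 : 1 <= D y x.
    apply: le_trans g1 _.
    exact: (fmax_ge (fun g : X -> R => `|g x - g y|) Hg1).
  have := ler_wpM2l (ltW C0) D1; rewrite mulr1 /C; lra.
have [y [Hy Hxy]] := Hys x.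
have Dl : D y x < eta by apply: fmax_lt.
have CD : C * D y x < e' by rewrite -Ceta ltr_pM2l.
have := key x y (fun g Hg => lt_le_trans (Hxy g Hg) eta1).
rewrite distrC => hxy.
have hn := ler_norm (h y - h x).
have := fmin_le (fun y => phi y x) M Hy; rewrite /phi => up.
have ee : e = 4 * e' by rewrite /e'; lra.
rewrite /phi in lo up *.
rewrite ltr_distlC; apply/andP; split; lra.
Qed.
Unset Implicit Arguments. Set Strict Implicit.

Theorem mainTheorem12 (R : realType)
  (B : Type -> Type) (Bmap : forall X Y : Type, (X -> Y) -> B X -> B Y)
  (Bmap_id : forall (X : Type) (b : B X), Bmap X X (fun x => x) b = b)
  (Bmap_comp : forall (X Y Z : Type) (f : X -> Y) (g : Y -> Z) (b : B X),
      Bmap X Z (fun x => g (f x)) b = Bmap Y Z g (Bmap X Y f b))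
  (Lambda : Type) (tau : Lambda -> B R -> R)
  (H1 : forall (Y : Type) (k : Y -> R), bounded_fun k ->
      forall l, bounded_fun (fun b => tau l (Bmap Y R k b)))
  (H2 : forall (Y : Type) (k : nat -> Y -> R) (h : Y -> R), unif_conv k h ->
      forall l, unif_conv (fun i b => tau l (Bmap Y R (k i) b))
                          (fun b => tau l (Bmap Y R h b)))
  (X : Type) (S : (X -> R) -> Prop)
  (Sbdd : forall k, S k -> bounded_fun k)
  (S1 : S (fun _ => 1))
  (Smin : forall k1 k2, S k1 -> S k2 -> S (fun x => Num.min (k1 x) (k2 x)))
  (Sadd : forall (r : R) k, S k -> S (fun x => r + k x))
  (Smul : forall (r : R) k, S k -> S (fun x => r * k x)) :
  forall h : X -> R, unif_cont (unifF S) h ->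
  forall l : Lambda,
    unif_cont
      (unifF (fun g : B X -> R => exists (k : X -> R) (l' : Lambda),
                 S k /\ g = (fun b => tau l' (Bmap X R k b))))
      (fun b => tau l (Bmap X R h b)).
Proof.
move=> h Hh l e e0.
have Hseq : forall i : nat, exists k, S k /\ forall x, `|k x - h x| < (i.+1%:R)^-1.
  move=> i; apply: (approx Sbdd S1 Smin Sadd Smul Hh).
  by rewrite invr_gt0 ltr0n.
pose kseq i := proj1_sig (constructive_indefinite_description _ (Hseq i)).
have kS i : S (kseq i) by rewrite /kseq; case: constructive_indefinite_description => k [].
have kC i x : `|kseq i x - h x| < (i.+1%:R)^-1.
  by rewrite /kseq; case: constructive_indefinite_description => k [].
have Hconv : unif_conv kseq h.
  move=> d d0; exists (Num.bound d^-1) => i Hi x.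
  apply: lt_trans (kC i x) _.
  have di : 0 <= d^-1 by rewrite invr_ge0 ltW.
  have b := archi_boundP di.
  rewrite -[d]invrK ltf_pV2 ?posrE ?invr_gt0 ?ltr0n //.
  apply: lt_le_trans b _; rewrite ler_nat; exact: leqW.
have [N HN] := H2 X kseq h Hconv l (e / 3) ltac:(lra).
exists 1%N, (fun _ => fun b => tau l (Bmap X R (kseq N) b)), (fun _ => e / 3).
split; first by move=> i; exists (kseq N), l; split.
split; first by move=> i; lra.
move=> b b' Hb /=.
have h0 := Hb ord0.
have hb := HN N (leqnn N) b; have hb' := HN N (leqnn N) b'.
set T := tau l (Bmap X R h b) in hb *.
set T' := tau l (Bmap X R h b') in hb' *.
set U := tau l (Bmap X R (kseq N) b) in hb h0 *.
set U' := tau l (Bmap X R (kseq N) b') in hb' h0 *.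
have t1 : `|T - T'| <= `|T - U| + `|U - T'| by apply: ler_distD.
have t2 : `|U - T'| <= `|U - U'| + `|U' - T'| by apply: ler_distD.
rewrite (distrC T U) in t1.
clear -t1 t2 h0 hb hb' e0.
lra.
Qed.
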